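(* Let $p,q\ge 0$ be integers and let $\lambda=(p+1,1^{q})$. Let $z_{-q},\dots,z_p\in\mathbb{C}$ with $\Re(z_k)\ge 1$ for all $-q\le k\le p$, $\Re(z_p)>1$ and $\Re(z_{-q})>1$, and let ${\pmb s}\in T(\lambda,\mathbb{C})$ have first row $z_0,z_1,\dots,z_p$ and first column $z_0,z_{-1},\dots,z_{-q}$ (i.e. $s_{1,j}=z_{j-1}$, $s_{i,1}=z_{-(i-1)}$). Then $$\zeta_{\lambda}({\pmb s})=\sum_{j=0}^{p}(-1)^j\,\zeta(z_{j},\ldots,z_{1},z_0,z_{-1},\ldots,z_{-q})\,\zeta^{\star}(z_{j+1},\ldots,z_{p}),$$ where $\zeta^{\star}(z_{j+1},\ldots,z_{p})$ is interpreted as $1$ when $j=p$.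
   Context: Euler–Zagier multiple zeta-function and its star variant: $\zeta(s_1,\ldots,s_r)=\sum_{0<m_1<\cdots<m_r}m_1^{-s_1}\cdots m_r^{-s_r}$ and $\zeta^{\star}(s_1,\ldots,s_r)=\sum_{0<m_1\le\cdots\le m_r}m_1^{-s_1}\cdots m_r^{-s_r}$. For a partition $\lambda$, $T(\lambda,X)$ denotes the set of fillings of the Young diagram of $\lambda$ by elements of $X$, and $\mathrm{SSYT}(\lambda)$ is the set of semi-standard Young tableaux $M=(m_{ij})\in T(\lambda,\mathbb{N})$, i.e. weakly increasing along rows and strictly increasing down columns. For ${\pmb s}=(s_{ij})\in T(\lambda,\mathbb{C})$ the Schur multiple zeta-function is $\zeta_\lambda({\pmb s})=\sum_{M\in\mathrm{SSYT}(\lambda)}\prod_{(i,j)\in\lambda}m_{ij}^{-s_{ij}}$. The content of box $(i,j)$ is $j-i$; content-parametrized means $s_{ij}=z_{j-i}$. *)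

(* Defs.v *)
From Stdlib Require Import Reals ZArith List Bool Arith.
From Coquelicot Require Import Coquelicot.
Import ListNotations.
Open Scope R_scope.

(** m^(-s) for a positive integer m and s in C, i.e. exp(-s log m):
    with s = a + i b,  m^(-s) = e^(-a log m) (cos(b log m) - i sin(b log m)). *)
Definition cpow_neg (m : nat) (s : C) : C :=
  (exp (- (Re s) * ln (INR m)) * cos (Im s * ln (INR m)),
   - (exp (- (Re s) * ln (INR m)) * sin (Im s * ln (INR m)))).

Definition zconv (u : nat -> C) : Prop :=
  exists l : C, filterlim u eventually (locally l).
Definition zlim (u : nat -> C) : C :=
  @iota C_CompleteNormedModule (fun l : C => filterlim u eventually (locally l)).

Fixpoint csum (f : nat -> C) (N : nat) : C :=
  match N with
  | O => RtoC 0
  | S n => Cplus (csum f n) (f (S n))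
  end.

(** Truncated Euler-Zagier multiple zeta, argument list given REVERSED:
    mzv_tr [s_r; ...; s_1] N = sum_{0<m_1<...<m_r<=N} m_1^-s_1 ... m_r^-s_r *)
Fixpoint mzv_tr (rs : list C) (N : nat) : C :=
  match rs with
  | [] => RtoC 1
  | x :: rs' => csum (fun m => Cmult (cpow_neg m x) (mzv_tr rs' (m - 1)%nat)) N
  end.

(** Truncated star variant: sum_{0<m_1<=...<=m_r<=N} *)
Fixpoint mzs_tr (rs : list C) (N : nat) : C :=
  match rs with
  | [] => RtoC 1
  | x :: rs' => csum (fun m => Cmult (cpow_neg m x) (mzs_tr rs' m)) N
  end.

(** zeta(s_1,...,s_r) and zeta^star(s_1,...,s_r), as limits of the partial
    sums with m_r <= N (zeta^star() = zeta() = 1 for the empty list). *)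
Definition MZV (s : list C) : C := zlim (mzv_tr (rev s)).
Definition MZS (s : list C) : C := zlim (mzs_tr (rev s)).

(** Young diagrams: a partition lam = [lam_1; lam_2; ...]; boxes (i,j) are
    1-indexed with 1 <= i <= length lam, 1 <= j <= lam_i. *)
Definition in_diagram (lam : list nat) (i j : nat) : bool :=
  (1 <=? i)%nat && (i <=? length lam)%nat &&
  (1 <=? j)%nat && (j <=? nth (i - 1) lam 0%nat)%nat.

Definition boxes (lam : list nat) : list (nat * nat) :=
  flat_map (fun i => map (fun j => (i, j)) (seq 1 (nth (i - 1) lam 0%nat)))
           (seq 1 (length lam)).

Definition is_ssyt (lam : list nat) (M : nat -> nat -> nat) : bool :=
  forallb (fun b : nat * nat => let (i, j) := b in
     (1 <=? M i j)%nat
     && (negb (in_diagram lam i (S j)) || (M i j <=? M i (S j))%nat)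
     && (negb (in_diagram lam (S i) j) || (M i j <? M (S i) j)%nat))
   (boxes lam).

Fixpoint all_lists (N k : nat) : list (list nat) :=
  match k with
  | O => [[]]
  | S k' => flat_map (fun m => map (cons m) (all_lists N k')) (seq 1 N)
  end.

Fixpoint assign (bs : list (nat * nat)) (ms : list nat) (i j : nat) : nat :=
  match bs, ms with
  | b :: bs', m :: ms' =>
      if (Nat.eqb (fst b) i && Nat.eqb (snd b) j) then m else assign bs' ms' i j
  | _, _ => 0%nat
  end.

Definition Csum_list (l : list C) : C := fold_right Cplus (RtoC 0) l.
Definition Cprod_list (l : list C) : C := fold_right Cmult (RtoC 1) l.

(** Truncated Schur multiple zeta: sum over M in SSYT(lam) with all entries
    <= N of prod_{(i,j) in lam} m_ij^(-s_ij).  s : nat -> nat -> C represents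
    an element of T(lam, C) (only its values on the boxes matter). *)
Definition schur_tr (lam : list nat) (s : nat -> nat -> C) (N : nat) : C :=
  Csum_list
    (map (fun ms =>
            let M := assign (boxes lam) ms in
            if is_ssyt lam M then
              Cprod_list (map (fun b : nat * nat =>
                                 cpow_neg (M (fst b) (snd b)) (s (fst b) (snd b)))
                              (boxes lam))
            else RtoC 0)
         (all_lists N (length (boxes lam)))).

Definition SchurZeta (lam : list nat) (s : nat -> nat -> C) : C :=
  zlim (schur_tr lam s).

Definition hook (p q : nat) : list nat := S p :: repeat 1%nat q.

(* Main.v *)
Require Import Defs.
From Stdlib Require Import Reals ZArith List.
From Coquelicot Require Import Coquelicot.
Import ListNotations.
Open Scope R_scope.
From Stdlib Require Import Lia Lra Bool.
Set Bullet Behavior "Strict Subproofs".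


Lemma Csum_app l1 l2 : Csum_list (l1 ++ l2) = Cplus (Csum_list l1) (Csum_list l2).
Proof. induction l1; simpl. ring. rewrite IHl1. ring. Qed.

Lemma Csum_plus {A} (f g : A -> C) l :
  Csum_list (map (fun x => Cplus (f x) (g x)) l) =
  Cplus (Csum_list (map f l)) (Csum_list (map g l)).
Proof. induction l; simpl. ring. rewrite IHl. ring. Qed.

Lemma Csum_scal {A} (c : C) (f : A -> C) l :
  Csum_list (map (fun x => Cmult c (f x)) l) = Cmult c (Csum_list (map f l)).
Proof. induction l; simpl. ring. rewrite IHl. ring. Qed.

Lemma Csum_ext_in {A} (f g : A -> C) l :
  (forall x, In x l -> f x = g x) -> Csum_list (map f l) = Csum_list (map g l).
Proof. induction l; simpl; intros H. auto. rewrite H, IHl; auto. Qed.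

Lemma Csum_zero {A} (l : list A) : Csum_list (map (fun _ => RtoC 0) l) = RtoC 0.
Proof. induction l; simpl. auto. rewrite IHl. ring. Qed.

Lemma Csum_fubini {A B} (F : A -> B -> C) l1 l2 :
  Csum_list (map (fun x => Csum_list (map (fun y => F x y) l2)) l1) =
  Csum_list (map (fun y => Csum_list (map (fun x => F x y) l1)) l2).
Proof.
  induction l1; simpl.
  - rewrite Csum_zero. auto.
  - rewrite IHl1. rewrite <- Csum_plus. auto.
Qed.

Lemma Csum_flat_map {A B} (f : B -> C) (g : A -> list B) l :
  Csum_list (map f (flat_map g l)) = Csum_list (map (fun x => Csum_list (map f (g x))) l).
Proof. induction l; simpl. auto. rewrite map_app, Csum_app, IHl. auto. Qed.

Lemma csum_seq f N : csum f N = Csum_list (map f (seq 1 N)).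
Proof.
  induction N. simpl. auto.
  rewrite seq_S, map_app, Csum_app, <- IHN. simpl. ring.
Qed.

Definition LS N k (f : list nat -> C) := Csum_list (map f (all_lists N k)).

Lemma LS_0 N f : LS N 0 f = f [].
Proof. unfold LS; simpl. ring. Qed.

Lemma LS_S N k f : LS N (S k) f =
  Csum_list (map (fun m => LS N k (fun l => f (m :: l))) (seq 1 N)).
Proof.
  unfold LS; simpl. rewrite Csum_flat_map. apply Csum_ext_in. intros.
  rewrite map_map. auto.
Qed.

Lemma LS_ext_in N k f g : (forall l, In l (all_lists N k) -> f l = g l) -> LS N k f = LS N k g.
Proof. apply Csum_ext_in. Qed.

Lemma LS_ext N k f g : (forall l, f l = g l) -> LS N k f = LS N k g.
Proof. intros; apply LS_ext_in; auto. Qed.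

Lemma all_lists_in N k l : In l (all_lists N k) -> length l = k /\ List.Forall (fun x => (1 <= x <= N)%nat) l.
Proof.
  revert l; induction k; simpl; intros l H.
  - destruct H as [<-|[]]. auto.
  - apply in_flat_map in H. destruct H as [m [Hm Hl]].
    apply in_map_iff in Hl. destruct Hl as [l' [<- Hl']].
    apply in_seq in Hm. destruct (IHk _ Hl'). simpl. split. auto. constructor; auto. lia.
Qed.

Lemma LS_plus N k f g : LS N k (fun l => Cplus (f l) (g l)) = Cplus (LS N k f) (LS N k g).
Proof. apply Csum_plus. Qed.

Lemma LS_scal N k c f : LS N k (fun l => Cmult c (f l)) = Cmult c (LS N k f).
Proof. apply Csum_scal. Qed.

Lemma LS_fubini N k1 k2 F : LS N k1 (fun l1 => LS N k2 (fun l2 => F l1 l2)) =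
   LS N k2 (fun l2 => LS N k1 (fun l1 => F l1 l2)).
Proof. apply Csum_fubini. Qed.

Lemma LS_app N a b f : LS N (a + b) f = LS N a (fun l1 => LS N b (fun l2 => f (l1 ++ l2))).
Proof.
  revert f; induction a; intros f; simpl.
  - rewrite LS_0. auto.
  - rewrite !LS_S. apply Csum_ext_in; intros. rewrite IHa. auto.
Qed.

Lemma LS_1 N g : LS N 1 g = Csum_list (map (fun m => g [m]) (seq 1 N)).
Proof. rewrite LS_S. apply Csum_ext_in; intros. rewrite LS_0. auto. Qed.

Lemma LS_rev N k f : LS N k f = LS N k (fun l => f (rev l)).
Proof.
  revert f; induction k; intros f.
  - rewrite !LS_0. auto.
  - symmetry. rewrite LS_S.
    transitivity (Csum_list (map (fun m => LS N k (fun l => f (l ++ [m]))) (seq 1 N))).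
    + apply Csum_ext_in; intros. rewrite (IHk (fun l => f (l ++ [x]))). auto.
    + replace (S k) with (k + 1)%nat by lia. rewrite LS_app. unfold LS at 2.
      rewrite (Csum_ext_in _ (fun l1 => Csum_list (map (fun m => f (l1 ++ [m])) (seq 1 N))))
        by (intros; apply LS_1).
      unfold LS. apply Csum_fubini.
Qed.

Lemma Csum_trunc_seq M N g : (M <= N)%nat ->
  Csum_list (map (fun m => if (m <=? M)%nat then g m else RtoC 0) (seq 1 N)) =
  Csum_list (map g (seq 1 M)).
Proof.
  intros H. replace N with (M + (N - M))%nat by lia.
  rewrite seq_app, map_app, Csum_app.
  rewrite (Csum_ext_in _ g (seq 1 M)).
  2:{ intros x Hx. apply in_seq in Hx. destruct (Nat.leb_spec x M); auto; lia. }
  rewrite (Csum_ext_in _ (fun _ => RtoC 0) (seq (1 + M) (N - M))).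
  2:{ intros x Hx. apply in_seq in Hx. destruct (Nat.leb_spec x M); auto; lia. }
  rewrite Csum_zero. ring.
Qed.

Definition allle M (l : list nat) := forallb (fun x => (x <=? M)%nat) l.

Lemma LS_trunc N M k g : (M <= N)%nat ->
  LS N k (fun l => if allle M l then g l else RtoC 0) = LS M k g.
Proof.
  intros HM; revert g; induction k; intros g.
  - rewrite !LS_0. auto.
  - rewrite !LS_S. rewrite <- (Csum_trunc_seq M N); auto.
    apply Csum_ext_in; intros m _. simpl.
    destruct (m <=? M)%nat; simpl.
    + apply IHk.
    + unfold LS. apply Csum_zero.
Qed.


Fixpoint cp (xs : list C) (l : list nat) : C :=
  match xs, l with
  | x :: xs', m :: l' => Cmult (cpow_neg m x) (cp xs' l')
  | _, _ => RtoC 1 end.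

Fixpoint chain (R : nat -> nat -> bool) (l : list nat) : bool :=
  match l with
  | a :: t => match t with b :: _ => R a b && chain R t | [] => true end
  | [] => true end.

Definition sdec := chain (fun a b => (b <? a)%nat).
Definition wdec := chain (fun a b => (b <=? a)%nat).

Lemma chain_allle (R : nat -> nat -> bool) :
  (forall a b, R a b = true -> (b <= a)%nat) ->
  forall t b, chain R (b :: t) = true -> allle b t = true.
Proof.
  intros HR; induction t; intros b H; simpl in *. auto.
  apply andb_true_iff in H as [H1 H2]. apply HR in H1.
  apply andb_true_iff. split. apply Nat.leb_le; auto.
  specialize (IHt _ H2). unfold allle in *. rewrite forallb_forall in *.
  intros x Hx. specialize (IHt x Hx). apply Nat.leb_le in IHt. apply Nat.leb_le. lia.
Qed.

Lemma chain_cons2 R m b t : chain R (m :: b :: t) = R m b && chain R (b :: t).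
Proof. reflexivity. Qed.
Lemma allle_cons M b t : allle M (b :: t) = (b <=? M)%nat && allle M t.
Proof. reflexivity. Qed.
Lemma allle_mono M M' t : (M <= M')%nat -> allle M t = true -> allle M' t = true.
Proof.
  intros H. unfold allle. rewrite !forallb_forall. intros H1 x Hx.
  specialize (H1 x Hx). apply Nat.leb_le in H1. apply Nat.leb_le. lia.
Qed.

Lemma sdec_cons m l : (1 <= m)%nat -> sdec (m :: l) = allle (m - 1) l && sdec l.
Proof.
  intros Hm. destruct l as [|b t]. reflexivity.
  unfold sdec. rewrite chain_cons2, allle_cons.
  destruct (chain (fun a b0 : nat => (b0 <? a)%nat) (b :: t)) eqn:E.
  - assert (HA' : allle b t = true).
    { apply (chain_allle (fun a b => (b <? a)%nat)) ; auto. intros a c Hc. apply Nat.ltb_lt in Hc. lia. }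
    rewrite !andb_true_r.
    destruct (Nat.ltb_spec b m); destruct (Nat.leb_spec b (m-1)); simpl; try lia.
    all: try (rewrite !andb_false_r; reflexivity).
    symmetry. apply (allle_mono b); auto; lia.
  - rewrite !andb_false_r. auto.
Qed.

Lemma wdec_cons m l : wdec (m :: l) = allle m l && wdec l.
Proof.
  destruct l as [|b t]. reflexivity.
  unfold wdec. rewrite chain_cons2, allle_cons.
  destruct (chain (fun a b0 : nat => (b0 <=? a)%nat) (b :: t)) eqn:E.
  - assert (HA' : allle b t = true).
    { apply (chain_allle (fun a b => (b <=? a)%nat)) ; auto. intros a c Hc. apply Nat.leb_le in Hc. lia. }
    rewrite !andb_true_r.
    destruct (Nat.leb_spec b m); simpl; try lia.
    all: try (rewrite !andb_false_r; reflexivity).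
    symmetry. apply (allle_mono b); auto.
  - rewrite !andb_false_r. auto.
Qed.

Lemma mzv_LS rs N : mzv_tr rs N = LS N (length rs) (fun l => if sdec l then cp rs l else RtoC 0).
Proof.
  revert N; induction rs as [|x rs IH]; intros N.
  - rewrite LS_0. reflexivity.
  - simpl mzv_tr. rewrite csum_seq. simpl length. rewrite LS_S.
    apply Csum_ext_in; intros m Hm. apply in_seq in Hm.
    rewrite IH. rewrite <- (LS_trunc N (m - 1)) by lia. rewrite <- LS_scal.
    apply LS_ext; intros l. rewrite sdec_cons by lia.
    destruct (allle (m-1) l); destruct (sdec l); simpl; ring.
Qed.

Lemma mzs_LS rs N : mzs_tr rs N = LS N (length rs) (fun l => if wdec l then cp rs l else RtoC 0).
Proof.
  revert N; induction rs as [|x rs IH]; intros N.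
  - rewrite LS_0. reflexivity.
  - simpl mzs_tr. rewrite csum_seq. simpl length. rewrite LS_S.
    apply Csum_ext_in; intros m Hm. apply in_seq in Hm.
    rewrite IH. rewrite <- (LS_trunc N m) by lia. rewrite <- LS_scal.
    apply LS_ext; intros l. rewrite wdec_cons.
    destruct (allle m l); destruct (wdec l); simpl; ring.
Qed.


Definition winc := chain (fun a b => (a <=? b)%nat).
Definition sinc := chain (fun a b => (a <? b)%nat).

Lemma chain_nth R l : chain R l = true <->
  (forall k, (S k < length l)%nat -> R (nth k l 0%nat) (nth (S k) l 0%nat) = true).
Proof.
  induction l as [|a t IH]. simpl. split; intros; auto; lia.
  destruct t as [|b t]. simpl. split; intros; auto; lia.
  rewrite chain_cons2, andb_true_iff, IH. split.
  - intros [H1 H2] k Hk. destruct k. exact H1. apply H2. simpl in *. lia.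
  - intros H. split. apply (H 0%nat). simpl; lia.
    intros k Hk. apply (H (S k)). simpl in *; lia.
Qed.

Lemma flat_map_ext_in {A B} (f g : A -> list B) l :
  (forall x, In x l -> f x = g x) -> flat_map f l = flat_map g l.
Proof. induction l; simpl; intros H; auto. rewrite H, IHl; auto. Qed.

Lemma boxes_hook p q : boxes (hook p q) =
  map (fun j => (1%nat, j)) (seq 1 (S p)) ++ map (fun i => (i, 1%nat)) (seq 2 q).
Proof.
  unfold boxes, hook. simpl. f_equal. f_equal. rewrite repeat_length.
  rewrite (flat_map_ext_in _ (fun i => [(i,1%nat)])).
  - clear. generalize 2%nat. induction q as [|q IHq]; intros n; simpl; auto; rewrite IHq; auto.
  - intros i Hi. apply in_seq in Hi. destruct i as [|[|i]]; try lia.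
    replace (S (S i) - 1)%nat with (S i) by lia.
    assert (nth i (repeat 1%nat q) 0%nat = 1%nat).
    { apply (repeat_spec q). apply nth_In. rewrite repeat_length. lia. }
    rewrite H. reflexivity.
Qed.

Lemma assign_row a n r rest rest' j : length r = n -> (a <= j < a + n)%nat ->
  assign (map (fun j => (1%nat, j)) (seq a n) ++ rest) (r ++ rest') 1 j = nth (j - a) r 0%nat.
Proof.
  revert a r; induction n; intros a r Hr Hj. lia.
  destruct r as [|m r]; simpl in Hr. lia.
  simpl. destruct (Nat.eqb_spec a j).
  - subst. rewrite Nat.sub_diag. reflexivity.
  - rewrite IHn by lia. replace (j - a)%nat with (S (j - S a)) by lia. reflexivity.
Qed.

Lemma assign_skip a n r rest rest' i j : length r = n -> (i <> 1 \/ j < a \/ a + n <= j)%nat ->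
  assign (map (fun j => (1%nat, j)) (seq a n) ++ rest) (r ++ rest') i j = assign rest rest' i j.
Proof.
  revert a r; induction n; intros a r Hr Hj.
  - destruct r; simpl in *; auto; lia.
  - destruct r as [|m r]; simpl in Hr. lia.
    simpl. destruct (Nat.eqb_spec a j).
    + subst. destruct i as [|[|i]]; simpl; try lia; rewrite IHn; auto; lia.
    + rewrite andb_false_r. rewrite IHn; auto; lia.
Qed.

Lemma assign_col a n c i : length c = n -> (a <= i < a + n)%nat ->
  assign (map (fun i => (i, 1%nat)) (seq a n)) c i 1 = nth (i - a) c 0%nat.
Proof.
  revert a c; induction n; intros a c Hr Hj. lia.
  destruct c as [|m c]; simpl in Hr. lia.
  simpl. destruct (Nat.eqb_spec a i); simpl.
  - subst. rewrite Nat.sub_diag. reflexivity.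
  - rewrite IHn by lia. replace (i - a)%nat with (S (i - S a)) by lia. reflexivity.
Qed.


Ltac bd := repeat match goal with
  | |- context [Nat.leb ?a ?b] => destruct (Nat.leb_spec a b)
  | |- context [Nat.ltb ?a ?b] => destruct (Nat.ltb_spec a b)
  | |- context [Nat.eqb ?a ?b] => destruct (Nat.eqb_spec a b)
  | H : context [Nat.leb ?a ?b] |- _ => destruct (Nat.leb_spec a b)
  | H : context [Nat.ltb ?a ?b] |- _ => destruct (Nat.ltb_spec a b)
  | H : context [Nat.eqb ?a ?b] |- _ => destruct (Nat.eqb_spec a b)
  end.

Lemma nth_hook p q i : (1 <= i)%nat ->
  nth (i - 1) (hook p q) 0%nat = if (i =? 1)%nat then S p else if (i <=? S q)%nat then 1%nat else 0%nat.
Proof.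
  intros Hi. unfold hook. destruct i as [|[|i]]; try lia. reflexivity.
  replace (S (S i) - 1)%nat with (S i) by lia. simpl nth.
  destruct (Nat.leb_spec (S (S i)) (S q)).
  - apply (repeat_spec q). apply nth_In. rewrite repeat_length. lia.
  - apply nth_overflow. rewrite repeat_length. lia.
Qed.

Lemma in_diag_hook p q i k : in_diagram (hook p q) i k = true <->
  ((i = 1 /\ 1 <= k <= S p) \/ (2 <= i <= S q /\ k = 1))%nat.
Proof.
  unfold in_diagram. rewrite !andb_true_iff, !Nat.leb_le.
  assert (length (hook p q) = S q) as L by (unfold hook; simpl; rewrite repeat_length; auto).
  rewrite L. split.
  - intros [[[H1 H2] H3] H4]. rewrite nth_hook in H4 by lia. revert H4. bd; intros; lia.
  - intros H. assert (1 <= i)%nat by lia. rewrite nth_hook by lia. bd; lia.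
Qed.

Lemma M_row p q r c j : length r = S p -> length c = q -> (1 <= j <= S p)%nat ->
  assign (boxes (hook p q)) (r ++ c) 1 j = nth (j - 1) r 0%nat.
Proof. intros; rewrite boxes_hook, assign_row; auto; lia. Qed.

Lemma M_col p q r c i : length r = S p -> length c = q -> (2 <= i <= S q)%nat ->
  assign (boxes (hook p q)) (r ++ c) i 1 = nth (i - 2) c 0%nat.
Proof.
  intros; rewrite boxes_hook, assign_skip by (auto; lia).
  rewrite assign_col; auto; lia.
Qed.

Lemma in_boxes_hook p q i j : In (i, j) (boxes (hook p q)) <->
  ((i = 1 /\ 1 <= j <= S p) \/ (2 <= i <= S q /\ j = 1))%nat.
Proof.
  rewrite boxes_hook, in_app_iff, !in_map_iff. split.
  - intros [[x [E H]]|[x [E H]]]; apply in_seq in H; inversion E; subst; lia.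
  - intros [[-> H]|[H ->]].
    + left. exists j. split; auto. apply in_seq. lia.
    + right. exists i. split; auto. apply in_seq. lia.
Qed.

Lemma ssyt_hook p q r c : length r = S p -> length c = q ->
  List.Forall (fun x => 1 <= x)%nat r -> List.Forall (fun x => 1 <= x)%nat c ->
  is_ssyt (hook p q) (assign (boxes (hook p q)) (r ++ c)) = winc r && sinc (hd 0%nat r :: c).
Proof.
  intros Lr Lc Pr Pc.
  apply eq_true_iff_eq. unfold is_ssyt, winc, sinc. rewrite forallb_forall, andb_true_iff, !chain_nth.
  assert (MR: forall j, (1<=j<=S p)%nat -> assign (boxes (hook p q)) (r ++ c) 1 j = nth (j-1) r 0%nat)
    by (intros; apply M_row; auto).
  assert (MC: forall i, (2<=i<=S q)%nat -> assign (boxes (hook p q)) (r ++ c) i 1 = nth (i-2) c 0%nat)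
    by (intros; apply M_col; auto).
  pose proof (in_diag_hook p q) as ID.
  assert (HD : hd 0%nat r = nth 0 r 0%nat) by (destruct r; reflexivity).
  rewrite HD.
  set (M := assign (boxes (hook p q)) (r ++ c)) in *.
  set (D := in_diagram (hook p q)) in *.
  split.
  - intros H. split.
    + intros k Hk. rewrite Lr in Hk.
      assert (Hb : In (1%nat, S k) (boxes (hook p q))) by (apply in_boxes_hook; lia).
      specialize (H _ Hb). simpl in H.
      apply andb_true_iff in H as [[_ H]%andb_true_iff _].
      apply orb_true_iff in H as [H|H].
      * exfalso. apply negb_true_iff in H. assert (D 1%nat (S (S k)) = true) by (apply ID; lia). congruence.
      * rewrite !MR in H by lia. replace (S k - 1)%nat with k in H by lia.
        replace (S (S k) - 1)%nat with (S k) in H by lia. exact H.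
    + intros k Hk. simpl length in Hk. rewrite Lc in Hk. destruct k as [|k].
      * assert (Hb : In (1%nat, 1%nat) (boxes (hook p q))) by (apply in_boxes_hook; lia).
        specialize (H _ Hb). simpl in H.
        apply andb_true_iff in H as [_ H].
        apply orb_true_iff in H as [H|H].
        -- exfalso. apply negb_true_iff in H. assert (D 2%nat 1%nat = true) by (apply ID; lia). congruence.
        -- rewrite MR, MC in H by lia. exact H.
      * assert (Hb : In (S (S k), 1%nat) (boxes (hook p q))) by (apply in_boxes_hook; lia).
        specialize (H _ Hb). simpl in H.
        apply andb_true_iff in H as [_ H].
        apply orb_true_iff in H as [H|H].
        -- exfalso. apply negb_true_iff in H. assert (D (S (S (S k))) 1%nat = true) by (apply ID; lia). congruence.
        -- rewrite !MC in H by lia. replace (S (S k) - 2)%nat with k in H by lia.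
           replace (S (S (S k)) - 2)%nat with (S k) in H by lia. exact H.
  - intros [HW HS] [i j] Hb. apply in_boxes_hook in Hb.
    rewrite List.Forall_forall in Pr, Pc.
    destruct Hb as [[-> Hj]|[Hi ->]].
    + rewrite !andb_true_iff, !orb_true_iff. rewrite (MR j) by lia. split; [split|].
      * apply Nat.leb_le. apply Pr. apply nth_In. lia.
      * destruct (D 1%nat (S j)) eqn:E; [right|left; auto].
        apply ID in E. rewrite MR by lia. specialize (HW (j-1)%nat). rewrite Lr in HW.
        replace (S (j-1)) with j in HW by lia. replace (S j - 1)%nat with j by lia. apply HW. lia.
      * destruct (D 2%nat j) eqn:E; [right|left; auto].
        apply ID in E. destruct E as [E|[E1 E2]]; [lia|]. subst j.
        rewrite MC by lia. apply (HS 0%nat). simpl. lia.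
    + rewrite !andb_true_iff, !orb_true_iff. rewrite (MC i) by lia. split; [split|].
      * apply Nat.leb_le. apply Pc. apply nth_In. lia.
      * left. destruct (D i 2%nat) eqn:E; auto. apply ID in E. lia.
      * destruct (D (S i) 1%nat) eqn:E; [right|left; auto].
        apply ID in E. rewrite MC by lia. specialize (HS (i-1)%nat). simpl length in HS.
        replace (S (i-1)) with i in HS by lia.
        replace (nth (i-1) (nth 0 r 0%nat :: c) 0%nat) with (nth (i-2) c 0%nat) in HS
          by (destruct i as [|[|i]]; try lia; simpl; f_equal; lia).
        replace (nth i (nth 0 r 0%nat :: c) 0%nat) with (nth (S i - 2) c 0%nat) in HS
          by (destruct i as [|[|i]]; try lia; simpl; f_equal; lia).
        apply HS. lia.
Qed.

Lemma Cprod_app l1 l2 : Cprod_list (l1 ++ l2) = Cmult (Cprod_list l1) (Cprod_list l2).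
Proof. induction l1; simpl. ring. rewrite IHl1. ring. Qed.

Lemma Cprod_ext_in {A} (f g : A -> C) l :
  (forall x, In x l -> f x = g x) -> Cprod_list (map f l) = Cprod_list (map g l).
Proof. induction l; simpl; intros H. auto. rewrite H, IHl; auto. Qed.

Lemma cp_seq f a n r : length r = n ->
  cp (map f (seq a n)) r = Cprod_list (map (fun j => cpow_neg (nth (j - a) r 0%nat) (f j)) (seq a n)).
Proof.
  revert a r; induction n; intros a r Hr.
  - destruct r; simpl in *; auto; lia.
  - destruct r as [|m r]; simpl in Hr; try lia. simpl. rewrite Nat.sub_diag. simpl.
    rewrite IHn by lia. f_equal. apply Cprod_ext_in. intros x Hx. apply in_seq in Hx.
    replace (x - a)%nat with (S (x - S a)) by lia. reflexivity.
Qed.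

Definition zrowS (s : nat -> nat -> C) p := map (fun j => s 1%nat j) (seq 1 (S p)).
Definition zcolS (s : nat -> nat -> C) q := map (fun i => s i 1%nat) (seq 2 q).

Lemma prod_hook p q s r c : length r = S p -> length c = q ->
  Cprod_list (map (fun b : nat * nat =>
     cpow_neg (assign (boxes (hook p q)) (r ++ c) (fst b) (snd b)) (s (fst b) (snd b)))
     (boxes (hook p q))) = Cmult (cp (zrowS s p) r) (cp (zcolS s q) c).
Proof.
  intros Lr Lc. set (M := assign (boxes (hook p q)) (r ++ c)).
  rewrite (boxes_hook p q). rewrite map_app, Cprod_app, !map_map.
  unfold zrowS, zcolS. rewrite !cp_seq by auto. f_equal; apply Cprod_ext_in; intros x Hx;
  apply in_seq in Hx; simpl.
  - unfold M. rewrite M_row by (auto; lia). reflexivity.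
  - unfold M. rewrite M_col by (auto; lia). reflexivity.
Qed.

Lemma schur_LS p q s N : schur_tr (hook p q) s N =
  LS N (S p) (fun r => LS N q (fun c =>
     if winc r && sinc (hd 0%nat r :: c) then Cmult (cp (zrowS s p) r) (cp (zcolS s q) c) else RtoC 0)).
Proof.
  unfold schur_tr. change (Csum_list (map ?f (all_lists N ?k))) with (LS N k f).
  replace (length (boxes (hook p q))) with (S p + q)%nat
    by (rewrite boxes_hook, length_app, !length_map, !length_seq; lia).
  rewrite LS_app. apply LS_ext_in; intros r Hr. apply all_lists_in in Hr as [Lr Pr].
  apply LS_ext_in; intros c Hc. apply all_lists_in in Hc as [Lc Pc].
  rewrite ssyt_hook; auto.
  - rewrite prod_hook by auto. reflexivity.
  - eapply List.Forall_impl; [|exact Pr]. simpl; intros; lia.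
  - eapply List.Forall_impl; [|exact Pc]. simpl; intros; lia.
Qed.


Lemma chain_rev R l : chain R (rev l) = chain (fun a b => R b a) l.
Proof.
  apply eq_true_iff_eq. rewrite !chain_nth, length_rev. split; intros H k Hk.
  - specialize (H (length l - S (S k))%nat ltac:(lia)).
    rewrite !rev_nth in H by lia.
    replace (length l - S (length l - S (S k)))%nat with (S k) in H by lia.
    replace (length l - S (S (length l - S (S k))))%nat with k in H by lia. exact H.
  - specialize (H (length l - S (S k))%nat ltac:(lia)).
    rewrite !rev_nth by lia.
    replace (length l - S k)%nat with (S (length l - S (S k))) by lia. exact H.
Qed.

Lemma sdec_rev l : sdec (rev l) = sinc l.
Proof. unfold sdec, sinc. rewrite chain_rev. reflexivity. Qed.
Lemma wdec_rev l : wdec (rev l) = winc l.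
Proof. unfold wdec, winc. rewrite chain_rev. reflexivity. Qed.

Lemma cp_app xs1 xs2 l1 l2 : length xs1 = length l1 ->
  cp (xs1 ++ xs2) (l1 ++ l2) = Cmult (cp xs1 l1) (cp xs2 l2).
Proof.
  revert l1; induction xs1; intros l1 H; destruct l1; simpl in *; try lia.
  - ring.
  - rewrite IHxs1 by lia. ring.
Qed.

Lemma cp_rev xs l : length xs = length l -> cp (rev xs) (rev l) = cp xs l.
Proof.
  revert l; induction xs; intros l H; destruct l; simpl in *; try lia; auto.
  rewrite cp_app by (rewrite !length_rev; lia). rewrite IHxs by lia. simpl. ring.
Qed.

Lemma prod_LS p q X Y j N : length X = S p -> length Y = q -> (j <= p)%nat ->
  Cmult (mzv_tr (rev (rev (firstn (S j) X) ++ Y)) N) (mzs_tr (rev (skipn (S j) X)) N)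
  = LS N (S p) (fun r => LS N q (fun c =>
      if sinc (rev (firstn (S j) r) ++ c) && winc (skipn (S j) r)
      then Cmult (cp X r) (cp Y c) else RtoC 0)).
Proof.
  intros LX LY Hj.
  assert (LF : length (firstn (S j) X) = S j) by (rewrite length_firstn; lia).
  assert (LS' : length (skipn (S j) X) = (p - j)%nat) by (rewrite length_skipn; lia).
  rewrite mzv_LS, mzs_LS.
  rewrite !length_rev, length_app, length_rev, LF, LY, LS'.
  set (F1 := fun l => if sdec l then cp (rev (rev (firstn (S j) X) ++ Y)) l else RtoC 0).
  set (F2 := fun l => if wdec l then cp (rev (skipn (S j) X)) l else RtoC 0).
  rewrite (LS_rev N (S j + q)), LS_app, (LS_rev N (S j)), (LS_rev N (p - j) F2).
  rewrite Cmult_comm, <- LS_scal.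
  replace (S p) with (S j + (p - j))%nat at 1 by lia. rewrite LS_app.
  apply LS_ext_in; intros a Ha. apply all_lists_in in Ha as [La _].
  rewrite <- LS_scal.
  transitivity (LS N q (fun c => LS N (p-j) (fun b => Cmult (F1 (rev (rev a ++ c))) (F2 (rev b))))).
  { apply LS_ext; intros c. rewrite Cmult_comm, <- LS_scal. reflexivity. }
  rewrite LS_fubini.
  apply LS_ext_in; intros b Hb. apply all_lists_in in Hb as [Lb _].
  apply LS_ext_in; intros c Hc. apply all_lists_in in Hc as [Lc _].
  replace (firstn (S j) (a ++ b)) with a.
  2:{ rewrite <- La. rewrite <- (Nat.add_0_r (length a)), firstn_app_2.
      simpl. rewrite app_nil_r. auto. }
  replace (skipn (S j) (a ++ b)) with b.
  2:{ rewrite skipn_app, La, Nat.sub_diag.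
      rewrite <- La, skipn_all. reflexivity. }
  unfold F1, F2.
  rewrite sdec_rev, wdec_rev, !rev_app_distr, !rev_involutive.
  rewrite <- (firstn_skipn (S j) X) at 3.
  rewrite cp_rev by (rewrite LS'; lia).
  rewrite cp_app by (rewrite !length_rev; lia).
  rewrite cp_rev by lia.
  rewrite cp_app by lia.
  destruct (sinc (rev a ++ c)); destruct (winc b); simpl; ring.
Qed.


Definition ind (b : bool) : C := if b then RtoC 1 else RtoC 0.

Lemma Csum_cons a l : Csum_list (a :: l) = Cplus a (Csum_list l).
Proof. reflexivity. Qed.

Lemma pointwise t : forall x c,
  ind (winc (x :: t) && sinc (x :: c)) =
  Csum_list (map (fun j => Cmult (RtoC ((-1) ^ j))
      (ind (sinc (rev (firstn (S j) (x :: t)) ++ c) && winc (skipn (S j) (x :: t)))))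
    (seq 0 (length (x :: t)))).
Proof.
  induction t as [|y t IH]; intros x c.
  - simpl. destruct (sinc (x :: c)); unfold ind; simpl; rewrite ?RtoC_mult; f_equal; ring.
  - change (length (x :: y :: t)) with (S (length (y :: t))).
    replace (seq 0 (S (length (y :: t)))) with (0%nat :: map S (seq 0 (length (y :: t))))
      by (rewrite seq_shift; reflexivity).
    rewrite map_cons, map_map.
    rewrite Csum_cons.
    rewrite (Csum_ext_in _ (fun j => Cmult (RtoC (-1)) (Cmult (RtoC ((-1) ^ j))
      (ind (sinc (rev (firstn (S j) (y :: t)) ++ x :: c) && winc (skipn (S j) (y :: t))))))).
    2:{ intros j _. rewrite Cmult_assoc. rewrite <- RtoC_mult. f_equal.
        change (firstn (S (S j)) (x :: y :: t)) with (x :: firstn (S j) (y :: t)).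
        change (skipn (S (S j)) (x :: y :: t)) with (skipn (S j) (y :: t)).
        simpl rev at 1. rewrite <- app_assoc. reflexivity. }
    rewrite Csum_scal, <- IH.
    change (firstn 1 (x :: y :: t)) with [x]. change (skipn 1 (x :: y :: t)) with (y :: t).
    simpl (rev [x] ++ c).
    unfold winc at 1. rewrite chain_cons2. fold (winc (y :: t)).
    unfold sinc at 3. rewrite chain_cons2. fold (sinc (x :: c)).
    destruct (winc (y :: t)); destruct (sinc (x :: c)); bd; unfold ind; simpl;
      apply injective_projections; simpl; try lia; lra.
Qed.

Lemma if_ind (b : bool) (P : C) : (if b then P else RtoC 0) = Cmult (ind b) P.
Proof. destruct b; unfold ind; ring. Qed.

Lemma LS_sum {A} N k (l : list A) F :
  Csum_list (map (fun j => LS N k (F j)) l) = LS N k (fun r => Csum_list (map (fun j => F j r) l)).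
Proof. unfold LS. apply Csum_fubini. Qed.

Lemma Csum_scal_r {A} (f : A -> C) P l :
  Csum_list (map (fun j => Cmult (f j) P) l) = Cmult (Csum_list (map f l)) P.
Proof. induction l; simpl. ring. rewrite IHl. ring. Qed.

Lemma finite_id p q X Y N : length X = S p -> length Y = q ->
  LS N (S p) (fun r => LS N q (fun c =>
     if winc r && sinc (hd 0%nat r :: c) then Cmult (cp X r) (cp Y c) else RtoC 0))
  = Csum_list (map (fun j => Cmult (RtoC ((-1) ^ j))
       (Cmult (mzv_tr (rev (rev (firstn (S j) X) ++ Y)) N) (mzs_tr (rev (skipn (S j) X)) N)))
     (seq 0 (S p))).
Proof.
  intros LX LY.
  rewrite (Csum_ext_in _ (fun j => LS N (S p) (fun r => LS N q (fun c =>
      Cmult (RtoC ((-1) ^ j)) (if sinc (rev (firstn (S j) r) ++ c) && winc (skipn (S j) r)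
      then Cmult (cp X r) (cp Y c) else RtoC 0))))).
  2:{ intros j Hj. apply in_seq in Hj. rewrite (prod_LS p q) by (auto; lia).
      rewrite <- LS_scal. apply LS_ext; intros r. rewrite <- LS_scal. reflexivity. }
  rewrite LS_sum.
  apply LS_ext_in; intros r Hr. apply all_lists_in in Hr as [Lr _].
  rewrite LS_sum. apply LS_ext; intros c.
  destruct r as [|x t]; simpl in Lr; try lia.
  rewrite if_ind. simpl hd. rewrite pointwise.
  rewrite (Csum_ext_in _ (fun j => Cmult (Cmult (RtoC ((-1) ^ j))
      (ind (sinc (rev (firstn (S j) (x :: t)) ++ c) && winc (skipn (S j) (x :: t)))))
      (Cmult (cp X (x :: t)) (cp Y c))) (seq 0 (S p))).
  2:{ intros j _. rewrite if_ind. ring. }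
  simpl length. rewrite Lr.
  rewrite Csum_scal_r. reflexivity.
Qed.


Lemma ln_0 : ln 0 = 0.
Proof. unfold ln. destruct (Rlt_dec 0 0) as [h|h]; [exfalso; lra | reflexivity]. Qed.

Lemma ln_nat_nonneg n : 0 <= ln (INR n).
Proof.
  destruct n. simpl. rewrite ln_0. lra.
  rewrite <- ln_1. apply ln_le. lra. rewrite S_INR. pose proof (pos_INR n). lra.
Qed.

Lemma ln_nat_mono n m : (n <= m)%nat -> ln (INR n) <= ln (INR m).
Proof.
  intros H. destruct n. simpl. rewrite ln_0. apply ln_nat_nonneg.
  apply ln_le. rewrite S_INR. pose proof (pos_INR n). lra. apply le_INR. auto.
Qed.

Lemma Cmod_cpow m s : Cmod (cpow_neg m s) = exp (- Re s * ln (INR m)).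
Proof.
  unfold Cmod, cpow_neg. simpl fst; simpl snd.
  set (E := exp (- Re s * ln (INR m))). set (t := Im s * ln (INR m)).
  replace ((E * cos t) ^ 2 + (- (E * sin t)) ^ 2) with (E ^ 2) by
    (pose proof (sin2_cos2 t) as HH; unfold Rsqr in HH; nra). apply sqrt_pow2. unfold E. pose proof (exp_pos (- Re s * ln (INR m))). lra.
Qed.

Lemma Cmod_cpow_le m s sig : sig <= Re s -> Cmod (cpow_neg m s) <= exp (- sig * ln (INR m)).
Proof.
  intros H. rewrite Cmod_cpow. destruct (Rle_lt_or_eq_dec _ _ H) as [H'|H'].
  - pose proof (ln_nat_nonneg m). destruct (Rle_lt_or_eq_dec _ _ H0).
    + left. apply exp_increasing. nra.
    + rewrite <- e. right. f_equal. ring.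
  - rewrite H'. lra.
Qed.

Fixpoint rsum (f : nat -> R) (N : nat) : R :=
  match N with O => 0 | S n => rsum f n + f (S n) end.

Lemma csum_le f N : Cmod (csum f N) <= rsum (fun m => Cmod (f m)) N.
Proof.
  induction N; simpl.
  - rewrite Cmod_0. lra.
  - eapply Rle_trans. apply Cmod_triangle. lra.
Qed.

Lemma rsum_le f g N : (forall m, (1 <= m <= N)%nat -> f m <= g m) -> rsum f N <= rsum g N.
Proof.
  induction N; simpl; intros H. lra.
  assert (rsum f N <= rsum g N) by (apply IHN; intros; apply H; lia).
  assert (f (S N) <= g (S N)) by (apply H; lia). lra.
Qed.

Lemma rsum_scal c f N : rsum (fun m => c * f m) N = c * rsum f N.
Proof. induction N; simpl. ring. rewrite IHN. ring. Qed.

Lemma ln_step n : (1 <= n)%nat -> / INR (S n) <= ln (INR (S n)) - ln (INR n).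
Proof.
  intros Hn. assert (1 <= INR n) by (apply (le_INR 1); auto).
  rewrite S_INR.
  assert (ln (INR n / (INR n + 1)) <= INR n / (INR n + 1) - 1).
  { pose proof (exp_ineq1_le (ln (INR n / (INR n + 1)))). rewrite exp_ln in H0. lra.
    apply Rdiv_lt_0_compat; lra. }
  unfold Rdiv in H0. rewrite ln_mult, ln_Rinv in H0 by (try apply Rinv_0_lt_compat; lra).
  replace (INR n * / (INR n + 1) - 1) with (- / (INR n + 1)) in H0 by (field; lra). lra.
Qed.

Lemma harm_le N : rsum (fun m => / INR m) N <= 1 + ln (INR N).
Proof.
  induction N.
  - simpl. rewrite ln_0. lra.
  - change (rsum (fun m => / INR m) (S N)) with (rsum (fun m => / INR m) N + / INR (S N)).
    destruct N.
    + simpl. rewrite ln_1. lra.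
    + pose proof (ln_step (S N) ltac:(lia)). lra.
Qed.

Lemma pow_ge1 x k : 1 <= x -> 1 <= x ^ k.
Proof. intros. induction k; simpl. lra. nra. Qed.

Lemma inner_bound (x : C) (T : nat -> C) (k : nat) (d : nat) :
  1 <= Re x -> (forall m, Cmod (T m) <= (1 + ln (INR (m - d))) ^ k) ->
  forall N, Cmod (csum (fun m => Cmult (cpow_neg m x) (T m)) N) <= (1 + ln (INR N)) ^ S k.
Proof.
  intros Hx HT N. eapply Rle_trans. apply csum_le.
  eapply Rle_trans with (rsum (fun m => (1 + ln (INR N)) ^ k * / INR m) N).
  - apply rsum_le. intros m Hm. rewrite Cmod_mult.
    assert (0 < INR m) by (apply lt_0_INR; lia).
    assert (Cmod (cpow_neg m x) <= / INR m).
    { eapply Rle_trans. apply (Cmod_cpow_le m x 1); auto.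
      right. rewrite <- (exp_ln (INR m)) at 2 by auto. rewrite <- exp_Ropp. f_equal. ring. }
    assert (Cmod (T m) <= (1 + ln (INR N)) ^ k).
    { eapply Rle_trans. apply HT. apply pow_incr. split.
      pose proof (ln_nat_nonneg (m - d)). lra.
      pose proof (ln_nat_mono (m - d) N ltac:(lia)). lra. }
    pose proof (Cmod_ge_0 (T m)). pose proof (Cmod_ge_0 (cpow_neg m x)).
    rewrite Rmult_comm. apply Rmult_le_compat; auto.
  - rewrite rsum_scal. simpl. rewrite Rmult_comm.
    pose proof (pow_ge1 (1 + ln (INR N)) k ltac:(pose proof (ln_nat_nonneg N); lra)).
    apply Rmult_le_compat_r. lra. apply harm_le.
Qed.

Lemma mzv_bound rs : List.Forall (fun y => 1 <= Re y) rs ->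
  forall N, Cmod (mzv_tr rs N) <= (1 + ln (INR N)) ^ length rs.
Proof.
  induction rs as [|x rs IH]; intros HF N.
  - simpl. rewrite Cmod_1. lra.
  - inversion HF; subst. simpl mzv_tr. simpl length.
    apply (inner_bound x (fun m => mzv_tr rs (m - 1)) (length rs) 1); auto.
Qed.

Lemma mzs_bound rs : List.Forall (fun y => 1 <= Re y) rs ->
  forall N, Cmod (mzs_tr rs N) <= (1 + ln (INR N)) ^ length rs.
Proof.
  induction rs as [|x rs IH]; intros HF N.
  - simpl. rewrite Cmod_1. lra.
  - inversion HF; subst. simpl mzs_tr. simpl length.
    apply (inner_bound x (fun m => mzs_tr rs m) (length rs) 0); auto.
    intros m. rewrite Nat.sub_0_r. auto.
Qed.


Lemma exp_pow a k : exp a ^ k = exp (INR k * a).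
Proof.
  induction k; simpl pow. rewrite Rmult_0_l, exp_0. auto.
  rewrite IHk, S_INR, <- exp_plus. f_equal. ring.
Qed.

Lemma log_bound d m : 0 < d -> 1 + ln (INR m) <= (1 + / d) * exp (d * ln (INR m)).
Proof.
  intros Hd. pose proof (ln_nat_nonneg m) as HL.
  pose proof (exp_ineq1_le (d * ln (INR m))) as HE.
  set (E := exp (d * ln (INR m))) in *. set (L := ln (INR m)) in *.
  assert (L <= / d * E).
  { apply (Rmult_le_reg_l d); auto. rewrite <- Rmult_assoc, Rinv_r by lra. nra. }
  assert (0 < / d) by (apply Rinv_0_lt_compat; lra). nra.
Qed.

Lemma term_bound sig k m : 1 < sig ->
  exp (- sig * ln (INR m)) * (1 + ln (INR m)) ^ k <=
  (1 + / ((sig - 1) / 2 / (INR k + 1))) ^ k * exp (- (1 + (sig - 1) / 2) * ln (INR m)).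
Proof.
  intros Hs. set (e := (sig - 1) / 2). set (d := e / (INR k + 1)).
  pose proof (pos_INR k). assert (0 < e) by (unfold e; lra).
  assert (Hd : 0 < d) by (unfold d; apply Rdiv_lt_0_compat; lra).
  pose proof (ln_nat_nonneg m) as HL.
  assert (HP1 : (1 + ln (INR m)) ^ k <= ((1 + / d) * exp (d * ln (INR m))) ^ k).
  { apply pow_incr. split. lra. apply log_bound; auto. }
  rewrite Rpow_mult_distr, exp_pow in HP1.
  assert (HP2 : exp (- sig * ln (INR m)) * exp (INR k * (d * ln (INR m))) <= exp (- (1 + e) * ln (INR m))).
  { rewrite <- exp_plus. destruct (Rle_lt_or_eq_dec _ _ HL) as [HL'|HL'].
    - left. apply exp_increasing. apply Rmult_lt_reg_r with (/ ln (INR m)).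
      apply Rinv_0_lt_compat; auto.
      replace ((- sig * ln (INR m) + INR k * (d * ln (INR m))) * / ln (INR m)) with (- sig + INR k * d) by (field; lra).
      replace (- (1 + e) * ln (INR m) * / ln (INR m)) with (- (1 + e)) by (field; lra).
      assert (INR k * d < e).
      { unfold d. apply (Rmult_lt_reg_r (INR k + 1)). lra. unfold Rdiv.
        rewrite Rmult_assoc, (Rmult_assoc e), Rinv_l by lra. nra. }
      unfold e in *. lra.
    - rewrite <- HL'. right. f_equal. ring. }
  pose proof (exp_pos (- sig * ln (INR m))).
  assert (0 <= (1 + / d) ^ k) by (apply pow_le; pose proof (Rinv_0_lt_compat d Hd); lra).
  apply Rle_trans with (exp (- sig * ln (INR m)) * ((1 + / d) ^ k * exp (INR k * (d * ln (INR m))))).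
  - apply Rmult_le_compat_l; lra.
  - nra.
Qed.

Lemma exp_mln x : 0 < x -> exp (- ln x) = / x.
Proof. intros. rewrite exp_Ropp, exp_ln; auto. Qed.

Lemma pser_step e m : 0 < e -> (1 <= m)%nat ->
  exp (- (1 + e) * ln (INR (S m))) <= / e * (exp (- e * ln (INR m)) - exp (- e * ln (INR (S m)))).
Proof.
  intros He Hm. pose proof (ln_step m Hm) as Hs.
  assert (0 < INR (S m)) by (apply lt_0_INR; lia).
  set (a := ln (INR m)) in *. set (b := ln (INR (S m))) in *.
  rewrite <- exp_mln in Hs by auto. fold b in Hs.
  assert (E1 : exp (- e * a) = exp (- e * b) * exp (e * (b - a))) by (rewrite <- exp_plus; f_equal; ring).
  pose proof (exp_ineq1_le (e * (b - a))).
  assert (E2 : exp (- (1 + e) * b) = exp (- e * b) * exp (- b)) by (rewrite <- exp_plus; f_equal; ring).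
  rewrite E1, E2. pose proof (exp_pos (- e * b)). pose proof (exp_pos (- b)).
  assert (e * exp (- b) <= e * (b - a)) by (apply Rmult_le_compat_l; lra).
  assert (e * exp (- b) <= exp (e * (b - a)) - 1) by lra.
  assert (exp (- e * b) * (e * exp (- b)) <= exp (- e * b) * (exp (e * (b - a)) - 1))
    by (apply Rmult_le_compat_l; lra).
  assert (exp (- e * b) * (e * exp (- b)) <= exp (- e * b) * exp (e * (b - a)) - exp (- e * b)) by lra.
  apply (Rmult_le_reg_l e); auto.
  match goal with |- _ <= e * (/ e * ?Z) => replace (e * (/ e * Z)) with Z by (field; lra) end.
  nra.
Qed.

Lemma pser_partial e N : 0 < e -> rsum (fun m => exp (- (1 + e) * ln (INR m))) N <= 1 + / e.
Proof.
  intros He. assert (0 < / e) by (apply Rinv_0_lt_compat; auto).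
  assert (forall N, (1 <= N)%nat -> rsum (fun m => exp (- (1 + e) * ln (INR m))) N + / e * exp (- e * ln (INR N)) <= 1 + / e).
  { intros n Hn. induction n. lia. destruct n.
    - simpl. rewrite ln_1, !Rmult_0_r, exp_0. lra.
    - change (rsum (fun m => exp (- (1 + e) * ln (INR m))) (S (S n))) with
        (rsum (fun m => exp (- (1 + e) * ln (INR m))) (S n) + exp (- (1 + e) * ln (INR (S (S n))))).
      pose proof (pser_step e (S n) He ltac:(lia)). specialize (IHn ltac:(lia)). lra. }
  destruct N. simpl. lra. specialize (H0 (S N) ltac:(lia)).
  pose proof (exp_pos (- e * ln (INR (S N)))). nra.
Qed.

Lemma sum_n_rsum g N : sum_n (fun n => match n with O => 0 | _ => g n end) N = rsum g N.
Proof.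
  induction N. rewrite sum_O. reflexivity.
  rewrite sum_Sn, IHN. reflexivity.
Qed.

Lemma ex_series_of_rsum (g : nat -> R) M : (forall n, 0 <= g n) -> (forall N, rsum g N <= M) ->
  ex_series (fun n => match n with O => 0 | _ => g n end).
Proof.
  intros Hg HM.
  destruct (ex_finite_lim_seq_incr (sum_n (fun n => match n with O => 0 | _ => g n end)) M) as [l Hl].
  - intros n. rewrite sum_Sn. rewrite sum_n_rsum. pose proof (Hg (S n)). unfold plus; simpl. lra.
  - intros n. rewrite sum_n_rsum. auto.
  - exists l. exact Hl.
Qed.

Lemma sum_n_csum f N : sum_n (fun n => match n with O => RtoC 0 | _ => f n end) N = csum f N.
Proof.
  induction N. rewrite sum_O. reflexivity.
  rewrite sum_Sn, IHN. reflexivity.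
Qed.

Lemma zconv_of f (b : nat -> R) M : (forall m, (1 <= m)%nat -> Cmod (f m) <= b m) ->
  (forall n, 0 <= b n) -> (forall N, rsum b N <= M) -> zconv (csum f).
Proof.
  intros Hf Hb HM.
  assert (HS : ex_series (fun n => match n with O => RtoC 0 | _ => f n end)).
  { apply (@ex_series_le C_AbsRing C_CompleteNormedModule _ (fun n => match n with O => 0 | _ => b n end)).
    - intros [|n]; change (norm ?x) with (Cmod x). rewrite Cmod_0. lra. apply Hf. lia.
    - eapply ex_series_of_rsum; eauto. }
  destruct HS as [l Hl]. exists l.
  eapply filterlim_ext; [|exact Hl]. intros N. simpl. apply sum_n_csum.
Qed.

Lemma conv_gen x T k : 1 < Re x -> (forall m, Cmod (T m) <= (1 + ln (INR m)) ^ k) ->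
  zconv (csum (fun m => Cmult (cpow_neg m x) (T m))).
Proof.
  intros Hx HT.
  set (e := (Re x - 1) / 2).
  set (K := (1 + / ((Re x - 1) / 2 / (INR k + 1))) ^ k).
  apply (zconv_of _ (fun m => K * exp (- (1 + e) * ln (INR m))) (K * (1 + / e))).
  - intros m Hm. rewrite Cmod_mult.
    eapply Rle_trans; [|apply term_bound; auto].
    apply Rmult_le_compat. apply Cmod_ge_0. apply Cmod_ge_0.
    apply Cmod_cpow_le. lra. apply HT.
  - intros n. assert (0 <= K).
    { unfold K. apply pow_le. pose proof (pos_INR k).
      assert (0 < (Re x - 1) / 2 / (INR k + 1)) by (apply Rdiv_lt_0_compat; lra).
      pose proof (Rinv_0_lt_compat _ H0). lra. }
    pose proof (exp_pos (- (1 + e) * ln (INR n))). nra.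
  - intros N. rewrite rsum_scal. assert (0 <= K).
    { unfold K. apply pow_le. pose proof (pos_INR k).
      assert (0 < (Re x - 1) / 2 / (INR k + 1)) by (apply Rdiv_lt_0_compat; lra).
      pose proof (Rinv_0_lt_compat _ H0). lra. }
    apply Rmult_le_compat_l; auto. apply pser_partial. unfold e; lra.
Qed.

Lemma mzv_conv x rs : 1 < Re x -> List.Forall (fun y => 1 <= Re y) rs -> zconv (mzv_tr (x :: rs)).
Proof.
  intros Hx HF. simpl mzv_tr.
  apply (conv_gen x (fun m => mzv_tr rs (m - 1)) (length rs)); auto.
  intros m. eapply Rle_trans. apply mzv_bound; auto.
  apply pow_incr. pose proof (ln_nat_nonneg (m - 1)). pose proof (ln_nat_mono (m - 1) m ltac:(lia)). lra.
Qed.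

Lemma mzs_conv x rs : 1 < Re x -> List.Forall (fun y => 1 <= Re y) rs -> zconv (mzs_tr (x :: rs)).
Proof.
  intros Hx HF. simpl mzs_tr.
  apply (conv_gen x (fun m => mzs_tr rs m) (length rs)); auto.
  intros m. apply mzs_bound; auto.
Qed.

Lemma conv_const (c : C) : zconv (fun _ => c).
Proof. exists c. apply filterlim_const. Qed.


Lemma zlim_eq u l : filterlim u eventually (locally l) -> zlim u = l.
Proof.
  intros Hl. unfold zlim.
  apply (@iota_filterlim_locally C_AbsRing C_CompleteNormedModule nat eventually _ u l Hl).
Qed.

Lemma zlim_spec u : zconv u -> filterlim u eventually (locally (zlim u)).
Proof. intros [l Hl]. rewrite (zlim_eq u l Hl). exact Hl. Qed.

Lemma lim_plus (u v : nat -> C) a b : filterlim u eventually (locally a) ->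
  filterlim v eventually (locally b) ->
  filterlim (fun N => Cplus (u N) (v N)) eventually (locally (Cplus a b)).
Proof.
  intros Hu Hv. apply (filterlim_comp_2 u v Cplus Hu Hv).
  apply (@filterlim_plus C_AbsRing C_NormedModule a b).
Qed.

Lemma to_abs (u : nat -> C) a : filterlim u eventually (@locally C_UniformSpace a) ->
  filterlim u eventually (@locally (AbsRing_UniformSpace C_AbsRing) a).
Proof. intros H P HP. apply H. apply locally_C. exact HP. Qed.

Lemma of_abs (u : nat -> C) a : filterlim u eventually (@locally (AbsRing_UniformSpace C_AbsRing) a) ->
  filterlim u eventually (@locally C_UniformSpace a).
Proof. intros H P HP. apply H. apply locally_C. exact HP. Qed.

Lemma lim_mult (u v : nat -> C) a b : filterlim u eventually (locally a) ->
  filterlim v eventually (locally b) ->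
  filterlim (fun N => Cmult (u N) (v N)) eventually (locally (Cmult a b)).
Proof.
  intros Hu Hv. apply of_abs.
  apply (filterlim_comp_2 u v Cmult (to_abs _ _ Hu) (to_abs _ _ Hv)).
  apply (@filterlim_mult C_AbsRing a b).
Qed.

Lemma lim_sum_prod (l : list nat) (c : nat -> C) (u v : nat -> nat -> C) :
  (forall j, In j l -> zconv (u j) /\ zconv (v j)) ->
  filterlim (fun N => Csum_list (map (fun j => Cmult (c j) (Cmult (u j N) (v j N))) l))
    eventually (locally (Csum_list (map (fun j => Cmult (c j) (Cmult (zlim (u j)) (zlim (v j)))) l))).
Proof.
  induction l as [|j l IH]; intros H; simpl.
  - apply filterlim_const.
  - apply lim_plus.
    + apply lim_mult. apply filterlim_const. destruct (H j (or_introl eq_refl)).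
      apply lim_mult; apply zlim_spec; auto.
    + apply IH. intros j0 Hj0. apply (H j0). right. exact Hj0.
Qed.


Lemma nth_map_seq {A} (f : nat -> A) a n k d : (k < n)%nat -> nth k (map f (seq a n)) d = f (a + k)%nat.
Proof.
  intros Hk. rewrite (nth_indep _ d (f 0%nat)) by (rewrite length_map, length_seq; auto).
  rewrite map_nth, seq_nth; auto.
Qed.

Definition Xr (p : nat) (z : Z -> C) := map (fun k => z (Z.of_nat k)) (seq 0 (S p)).
Definition Yc (q : nat) (z : Z -> C) := map (fun i => z (- Z.of_nat i)%Z) (seq 1 q).

Lemma Xr_len p z : length (Xr p z) = S p.
Proof. unfold Xr. rewrite length_map, length_seq. auto. Qed.
Lemma Yc_len q z : length (Yc q z) = q.
Proof. unfold Yc. rewrite length_map, length_seq. auto. Qed.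

Lemma zl_eq p q z j : (j <= p)%nat ->
  map (fun k => z (Z.of_nat j - Z.of_nat k)%Z) (seq 0 (j + q + 1)) = rev (firstn (S j) (Xr p z)) ++ Yc q z.
Proof.
  intros Hj. pose proof (Xr_len p z). pose proof (Yc_len q z).
  assert (LF : length (firstn (S j) (Xr p z)) = S j) by (rewrite length_firstn; lia).
  apply nth_ext with (d := RtoC 0) (d' := RtoC 0).
  - rewrite length_map, length_seq, length_app, length_rev. lia.
  - intros k Hk. rewrite length_map, length_seq in Hk.
    rewrite nth_map_seq by lia.
    destruct (Nat.lt_ge_cases k (S j)).
    + rewrite app_nth1 by (rewrite length_rev; lia).
      rewrite rev_nth by lia. rewrite LF. rewrite nth_firstn.
      destruct (Nat.ltb_spec (S j - S k) (S j)); try lia.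
      unfold Xr. rewrite nth_map_seq by lia. f_equal. lia.
    + rewrite app_nth2 by (rewrite length_rev; lia). rewrite length_rev, LF.
      unfold Yc. rewrite nth_map_seq by lia. f_equal. lia.
Qed.

Lemma zr_eq p z j : (j <= p)%nat ->
  map (fun k => z (Z.of_nat (j + 1 + k))) (seq 0 (p - j)) = skipn (S j) (Xr p z).
Proof.
  intros Hj. pose proof (Xr_len p z).
  apply nth_ext with (d := RtoC 0) (d' := RtoC 0).
  - rewrite length_map, length_seq, length_skipn. lia.
  - intros k Hk. rewrite length_map, length_seq in Hk.
    rewrite nth_map_seq by lia. rewrite nth_skipn. unfold Xr. rewrite nth_map_seq by lia.
    f_equal. f_equal. lia.
Qed.

Theorem theorem3p1 (p q : nat) (z : Z -> C) (s : nat -> nat -> C) :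
  (forall k : Z, (- Z.of_nat q <= k <= Z.of_nat p)%Z -> 1 <= Re (z k)) ->
  1 < Re (z (Z.of_nat p)) ->
  1 < Re (z (- Z.of_nat q)%Z) ->
  (forall j : nat, (1 <= j <= S p)%nat -> s 1%nat j = z (Z.of_nat j - 1)%Z) ->
  (forall i : nat, (1 <= i <= S q)%nat -> s i 1%nat = z (- (Z.of_nat i - 1))%Z) ->
  let zl (j : nat) : list C :=
    map (fun k => z (Z.of_nat j - Z.of_nat k)%Z) (seq 0 (j + q + 1)) in
  let zr (j : nat) : list C :=
    map (fun k => z (Z.of_nat (j + 1 + k))) (seq 0 (p - j)) in
  zconv (schur_tr (hook p q) s) /\
  (forall j : nat, (j <= p)%nat ->
     zconv (mzv_tr (rev (zl j))) /\ zconv (mzs_tr (rev (zr j)))) /\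
  SchurZeta (hook p q) s =
    Csum_list (map (fun j => Cmult (RtoC ((-1) ^ j))
                                   (Cmult (MZV (zl j)) (MZS (zr j))))
                   (seq 0 (S p))).
Proof.
  intros Hre Hp Hq Hs1 Hs2 zl zr.
  assert (Hrow : zrowS s p = Xr p z).
  { unfold zrowS, Xr. rewrite <- seq_shift, map_map. apply map_ext_in. intros k Hk.
    apply in_seq in Hk. rewrite Hs1 by lia. f_equal. lia. }
  assert (Hcol : zcolS s q = Yc q z).
  { unfold zcolS, Yc. rewrite <- seq_shift, map_map. apply map_ext_in. intros k Hk.
    apply in_seq in Hk. rewrite Hs2 by lia. f_equal. lia. }
  assert (HZL : forall j, (j <= p)%nat -> zl j = rev (firstn (S j) (Xr p z)) ++ Yc q z)
    by (intros; apply zl_eq; auto).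
  assert (HZR : forall j, (j <= p)%nat -> zr j = skipn (S j) (Xr p z))
    by (intros; apply zr_eq; auto).
  assert (FIN : forall N, schur_tr (hook p q) s N =
     Csum_list (map (fun j => Cmult (RtoC ((-1) ^ j))
       (Cmult (mzv_tr (rev (zl j)) N) (mzs_tr (rev (zr j)) N))) (seq 0 (S p)))).
  { intros N. rewrite schur_LS, Hrow, Hcol. rewrite finite_id by (apply Xr_len || apply Yc_len).
    apply Csum_ext_in. intros j Hj. apply in_seq in Hj. rewrite HZL, HZR by lia. reflexivity. }
  assert (CV : forall j, (j <= p)%nat -> zconv (mzv_tr (rev (zl j))) /\ zconv (mzs_tr (rev (zr j)))).
  { intros j Hj. split.
    - destruct (rev (zl j)) as [|x rs] eqn:E.
      + exfalso. assert (length (rev (zl j)) = 0%nat) by (rewrite E; reflexivity).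
        rewrite length_rev in H. unfold zl in H. rewrite length_map, length_seq in H. lia.
      + assert (Hx : x = nth 0 (rev (zl j)) (RtoC 0)) by (rewrite E; reflexivity).
        assert (Lz : length (zl j) = (j + q + 1)%nat) by (unfold zl; rewrite length_map, length_seq; auto).
        rewrite rev_nth in Hx by lia. rewrite Lz in Hx. unfold zl in Hx.
        rewrite nth_map_seq in Hx by lia.
        apply mzv_conv.
        * rewrite Hx. replace (Z.of_nat j - Z.of_nat (0 + (j + q + 1 - 1)))%Z with (- Z.of_nat q)%Z by lia.
          exact Hq.
        * apply List.Forall_forall. intros y Hy.
          assert (Hy' : In y (rev (zl j))) by (rewrite E; right; auto).
          apply in_rev in Hy'. unfold zl in Hy'. apply in_map_iff in Hy' as [k [<- Hk]].
          apply in_seq in Hk. apply Hre. lia.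
    - destruct (rev (zr j)) as [|x rs] eqn:E.
      + exists (RtoC 1). eapply filterlim_ext; [|apply filterlim_const]. intros N. reflexivity.
      + assert (Hx : x = nth 0 (rev (zr j)) (RtoC 0)) by (rewrite E; reflexivity).
        assert (Lz : length (zr j) = (p - j)%nat) by (unfold zr; rewrite length_map, length_seq; auto).
        assert (Lpos : (0 < p - j)%nat).
        { destruct (p - j)%nat eqn:Ep; try lia. exfalso.
          assert (length (rev (zr j)) = 0%nat) by (rewrite length_rev; lia). rewrite E in H. simpl in H. lia. }
        rewrite rev_nth in Hx by lia. rewrite Lz in Hx. unfold zr in Hx.
        rewrite nth_map_seq in Hx by lia.
        apply mzs_conv.
        * rewrite Hx. replace (j + 1 + (0 + (p - j - 1)))%nat with p by lia. exact Hp.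
        * apply List.Forall_forall. intros y Hy.
          assert (Hy' : In y (rev (zr j))) by (rewrite E; right; auto).
          apply in_rev in Hy'. unfold zr in Hy'. apply in_map_iff in Hy' as [k [<- Hk]].
          apply in_seq in Hk. apply Hre. lia. }
  assert (SC : filterlim (schur_tr (hook p q) s) eventually (locally
     (Csum_list (map (fun j => Cmult (RtoC ((-1) ^ j))
        (Cmult (zlim (mzv_tr (rev (zl j)))) (zlim (mzs_tr (rev (zr j)))))) (seq 0 (S p)))))).
  { eapply filterlim_ext. intros N. symmetry. apply FIN.
    apply (lim_sum_prod (seq 0 (S p)) (fun j => RtoC ((-1) ^ j))
             (fun j => mzv_tr (rev (zl j))) (fun j => mzs_tr (rev (zr j)))).
    intros j Hj. apply in_seq in Hj. apply CV. lia. }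
  split; [eexists; exact SC|]. split; [exact CV|].
  unfold SchurZeta. rewrite (zlim_eq _ _ SC). reflexivity.
Qed.
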